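(* Consider a credit-attribution game in which every paper has exactly two authors, two distinct players $x,y$, and the reliability extension of the full obligation game with fixed $p_x,p_y\in[0,1]$, baseline reliabilities $p^*_l\in(0,1]$, cost slopes $L_l,R_l>0$ and budget $B\ge0$. In the pairwise attack problem one must choose a feasible fractional attack on $x$ that leaves the reliabilities of $y$ and of all coauthors of $y$ at their baseline values, minimizing $Sh[\overline{v_{FO}}](x)$. Then the following is an optimal pairwise attack: run the greedy procedure (sort by decreasing $C(x,l)/L_l$, decrease to $0$ in order while the budget allows, decrease the next one as much as the remaining budget allows, leave everything else at baseline) restricted to the players $l\in CA(x)\setminus(CA(y)\cup\{y\})$.
   Context: Credit-attribution game: authors $N$, papers $P_k$ with author sets $Auth_k$ and weights $w_k\in\mathbb{R}_+$; $CA(z)$ is the set of coauthors of $z$; $C(x,l)=\sum w_k$ over papers authored by both $x$ and $l$. $v_{FO}(S)=\sum\{w_k:Auth_k\subseteq S\}$. For $T\subseteq S$, $\Pi_{T,S}=\prod_{i\in T}p_i\prod_{i\in S\setminus T}(1-p_i)$; reliability extension $\overline v(S)=\sum_{T\subseteq S}v(T)\Pi_{T,S}$. Shapley value $Sh[v](x)=\frac1{n!}\sum_\pi[v(S^x_\pi\cup\{x\})-v(S^x_\pi)]$. Fractional attack on $x$: $p_x$ fixed; for $j\ne x$ choose $p_j\in[0,1]$ at cost $u_j(p_j)=L_j(p^*_j-p_j)$ if $p_j<p^*_j$, $R_j(p_j-p^*_j)$ otherwise; feasible if the total cost is at most $B$. *)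

(* Defs.v *)
From HB Require Import structures.
From mathcomp Require Import all_boot all_order all_algebra all_fingroup.
Set Implicit Arguments. Unset Strict Implicit. Unset Printing Implicit Defensive.
Import Order.TTheory GRing.Theory Num.Theory.
Local Open Scope ring_scope.

Section CreditGame.
Variables (R : realFieldType) (N P : finType).
Variables (Auth : P -> {set N}) (w : P -> R).

Definition vFO (S : {set N}) : R := \sum_(k : P | Auth k \subset S) w k.

Definition CA (z : N) : {set N} :=
  [set l | (l != z) && [exists k : P, (z \in Auth k) && (l \in Auth k)]].

Definition Cxl (x l : N) : R := \sum_(k : P | (x \in Auth k) && (l \in Auth k)) w k.

Definition PiTS (p : N -> R) (T S : {set N}) : R :=
  (\prod_(i in T) p i) * \prod_(i in S :\: T) (1 - p i).

Definition vbar (p : N -> R) (v : {set N} -> R) (S : {set N}) : R :=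
  \sum_(T in powerset S) v T * PiTS p T S.

Definition pred_set (pi : {perm N}) (x : N) : {set N} :=
  [set i | (enum_rank (pi i) < enum_rank (pi x))%N].

Definition Shapley (v : {set N} -> R) (x : N) : R :=
  (#|N|`!)%:R^-1 *
  \sum_(pi : {perm N}) (v (x |: pred_set pi x) - v (pred_set pi x)).

Definition cost (pstar L Rs : N -> R) (j : N) (q : R) : R :=
  if q < pstar j then L j * (pstar j - q) else Rs j * (q - pstar j).

Definition feasible_attack (pstar L Rs : N -> R) (B : R) (x : N) (px : R)
  (p : N -> R) : Prop :=
  p x = px /\ (forall j, j != x -> 0 <= p j <= 1) /\
  \sum_(j | j != x) cost pstar L Rs j (p j) <= B.

(* pairwise: y and all coauthors of y (other than x, whose value is fixed)
   stay at baseline *)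
Definition pairwise_attack (pstar : N -> R) (x y : N) (p : N -> R) : Prop :=
  p y = pstar y /\ (forall z, z \in CA y -> z != x -> p z = pstar z).

Fixpoint greedy_aux (pstar L : N -> R) (s : seq N) (b : R) (q : N -> R)
  : N -> R :=
  match s with
  | [::] => q
  | l :: s' =>
      if L l * pstar l <= b then
        greedy_aux pstar L s' (b - L l * pstar l)
          (fun j => if j == l then 0 else q j)
      else (fun j => if j == l then pstar l - b / L l else q j)
  end.

Definition greedy (pstar L : N -> R) (B : R) (x : N) (px : R) (s : seq N)
  : N -> R :=
  greedy_aux pstar L s B (fun j => if j == x then px else pstar j).

End CreditGame.

(* Main.v *)
Require Import Defs.
From HB Require Import structures.
From mathcomp Require Import all_boot all_order all_algebra all_fingroup.
From mathcomp Require Import ring lra.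
Import Order.TTheory GRing.Theory Num.Theory.
Local Open Scope ring_scope.

Section Knap.
Variables (R : realFieldType) (N : finType) (pstar L Cf : N -> R).
Hypotheses (hL : forall l, 0 < L l) (hC : forall l, 0 <= Cf l).

Lemma greedy_notin s b q j : j \notin s -> greedy_aux pstar L s b q j = q j.
Proof.
elim: s b q => [//|l s IH] b q /=; rewrite in_cons negb_or => /andP[hjl hjs].
by case: ifP => _; rewrite ?IH //= (negbTE hjl).
Qed.

Lemma greedy_range s b q j : 0 <= b -> (forall i, i \in s -> 0 <= pstar i) ->
  greedy_aux pstar L s b q j = q j \/
  (0 <= greedy_aux pstar L s b q j <= pstar j).
Proof.
elim: s b q => [|l s IH] b q hb hp /=; first by left.
have hpl : 0 <= pstar l by apply: hp; rewrite mem_head.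
have hl := hL l.
case: ifP => hlb.
  have hb' : 0 <= b - L l * pstar l by rewrite subr_ge0.
  have hp' : forall i, i \in s -> 0 <= pstar i.
    by move=> i hi; apply: hp; rewrite in_cons hi orbT.
  case: (IH _ (fun j => if j == l then 0 else q j) hb' hp') => [->|]; last by right.
  case: eqP => [->|_]; last by left.
  by right; rewrite lexx hpl.
case: eqP => [->|_]; last by left.
right; move/negbT: hlb; rewrite -ltNge => hlb.
have h1 : b / L l < pstar l by rewrite ltr_pdivrMr // mulrC.
have h2 : 0 <= b / L l by apply: divr_ge0 => //; apply: ltW.
apply/andP; split; lra.
Qed.

Definition rel_r := fun a b : N => Cf b / L b <= Cf a / L a.

Lemma rel_trans : transitive rel_r.
Proof. move=> b a c; rewrite /rel_r => h1 h2; exact: le_trans h2 h1. Qed.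

Lemma sum_le_ratio l s d : all (rel_r l) s -> (forall j, j \in s -> 0 <= d j) ->
  \sum_(j <- s) Cf j * d j <= Cf l / L l * \sum_(j <- s) L j * d j.
Proof.
move=> /allP ha hd; rewrite big_distrr /= [X in X <= _]big_seq [X in _ <= X]big_seq.
apply: ler_sum => j hj.
rewrite mulrA; apply: ler_wpM2r; first exact: hd.
have := ha j hj; rewrite /rel_r ler_pdivrMr //.
Qed.

Lemma knap s : uniq s -> sorted rel_r s ->
  forall b q d, 0 <= b -> (forall j, j \in s -> q j = pstar j) ->
  (forall j, j \in s -> 0 <= d j <= pstar j) ->
  \sum_(j <- s) L j * d j <= b ->
  \sum_(j <- s) Cf j * d j <=
  \sum_(j <- s) Cf j * (pstar j - greedy_aux pstar L s b q j).
Proof.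
elim: s => [|l s IH] /=; first by move=> *; rewrite !big_nil.
move=> /andP[hls hu] hsort b q d hb hq hd hB.
have hsorts : sorted rel_r s := path_sorted hsort.
have hall : all (rel_r l) s := order_path_min rel_trans hsort.
have hdl : 0 <= d l <= pstar l by apply: hd; rewrite mem_head.
have hds : forall j, j \in s -> 0 <= d j <= pstar j.
  by move=> j hj; apply: hd; rewrite in_cons hj orbT.
have hds0 : forall j, j \in s -> 0 <= d j by move=> j /hds /andP[].
have hl := hL l. have hCl := hC l.
move: hB; rewrite !big_cons => hB.
set D := \sum_(j <- s) L j * d j in hB *.
set X := \sum_(j <- s) Cf j * d j.
have hX : X <= Cf l / L l * D by apply: sum_le_ratio.
have hr : 0 <= Cf l / L l by apply: divr_ge0 => //; apply: ltW.
have hrL : Cf l / L l * L l = Cf l by field; rewrite gt_eqF.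
case: ifP => hlb.
  set b' := b - L l * pstar l.
  set q1 := fun j => if j == l then 0 else q j.
  have hb' : 0 <= b' by rewrite subr_ge0.
  have hq1 : forall j, j \in s -> q1 j = pstar j.
    move=> j hj; rewrite /q1; case: eqP => [ejl|_].
      by move: hls; rewrite -ejl hj.
    by apply: hq; rewrite in_cons hj orbT.
  rewrite greedy_notin // /q1 eqxx subr0.
  case: (lerP D b') => hDb.
    have := IH hu hsorts b' q1 d hb' hq1 hds hDb.
    have : Cf l * d l <= Cf l * pstar l by apply: ler_wpM2l => //; case/andP: hdl.
    rewrite -/X; lra.
  set lam := b' / D.
  have hD0 : 0 < D by apply: le_lt_trans hDb.
  have hlam0 : 0 <= lam by apply: divr_ge0 => //; apply: ltW.
  have hlam1 : lam <= 1 by rewrite ler_pdivrMr // mul1r ltW.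
  have hds' : forall j, j \in s -> 0 <= lam * d j <= pstar j.
    move=> j hj; have /andP[h1 h2] := hds j hj.
    apply/andP; split; first exact: mulr_ge0.
    apply: le_trans h2; rewrite -[leRHS]mul1r; exact: ler_wpM2r.
  have hB' : \sum_(j <- s) L j * (lam * d j) <= b'.
    have -> : \sum_(j <- s) L j * (lam * d j) = lam * D.
      rewrite /D big_distrr /=; apply: eq_bigr => j _; ring.
    have -> : lam * D = b' by rewrite /lam; field; rewrite ?gt_eqF.
    exact: lexx.
  have := IH hu hsorts b' q1 _ hb' hq1 hds' hB'.
  have -> : \sum_(j <- s) Cf j * (lam * d j) = lam * X.
    rewrite /X big_distrr /=; apply: eq_bigr => j _; ring.
  have e1 : (1 - lam) * X <= (1 - lam) * (Cf l / L l * D).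
    by apply: ler_wpM2l => //; lra.
  have e2 : (1 - lam) * (Cf l / L l * D) = Cf l / L l * (D - b').
    by rewrite /lam; field; rewrite !gt_eqF.
  have e3 : Cf l / L l * (D - b') <= Cf l / L l * (L l * (pstar l - d l)).
    by apply: ler_wpM2l => //; rewrite /b'; lra.
  have e4 : Cf l / L l * (L l * (pstar l - d l)) = Cf l * (pstar l - d l).
    by field; rewrite gt_eqF.
  move: e1 e2 e3 e4; rewrite /q1 -/X; nra.
rewrite eqxx big1_seq; last first.
  move=> j /andP[_ hj]; have -> : (j == l) = false.
    by apply/negbTE; apply: contraNneq hls => <-.
  by rewrite hq ?subrr ?mulr0 // in_cons hj orbT.
have f1 : Cf l / L l * D <= Cf l / L l * (b - L l * d l).
  by apply: ler_wpM2l => //; lra.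
have f2 : Cf l / L l * (b - L l * d l) = Cf l * (b / L l) - Cf l * d l.
  by field; rewrite gt_eqF.
have f3 : Cf l * (pstar l - (pstar l - b / L l)) = Cf l * (b / L l) by congr (_ * _); ring.
rewrite f3; lra.
Qed.

Lemma cost_ge0 (Rs : N -> R) j v : 0 < Rs j -> 0 <= cost pstar L Rs j v.
Proof.
move=> hR; rewrite /cost; case: ltP => h.
  by apply: mulr_ge0; [apply: ltW | lra].
by apply: mulr_ge0; [apply: ltW | lra].
Qed.

Lemma cost_base (Rs : N -> R) j : cost pstar L Rs j (pstar j) = 0.
Proof. by rewrite /cost ltxx subrr mulr0. Qed.

Lemma greedy_cost (Rs : N -> R) s : uniq s -> (forall j, 0 < Rs j) ->
  (forall j, j \in s -> 0 < pstar j) ->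
  forall b q, 0 <= b -> (forall j, j \in s -> q j = pstar j) ->
  \sum_(j <- s) cost pstar L Rs j (greedy_aux pstar L s b q j) <= b.
Proof.
move=> + hR; elim: s => [|l s IH] /=; first by move=> *; rewrite big_nil.
move=> /andP[hls hu] hp b q hb hq; rewrite big_cons.
have hpl : 0 < pstar l by apply: hp; rewrite mem_head.
have hps : forall j, j \in s -> 0 < pstar j.
  by move=> j hj; apply: hp; rewrite in_cons hj orbT.
have hl := hL l.
case: ifP => hlb.
  set b' := b - L l * pstar l.
  set q1 := fun j => if j == l then 0 else q j.
  have hb' : 0 <= b' by rewrite subr_ge0.
  have hq1 : forall j, j \in s -> q1 j = pstar j.
    move=> j hj; rewrite /q1; case: eqP => [ejl|_].
      by move: hls; rewrite -ejl hj.
    by apply: hq; rewrite in_cons hj orbT.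
  have := IH hu hps b' q1 hb' hq1.
  rewrite greedy_notin // /q1 eqxx /cost hpl -/q1 /b'; lra.
rewrite eqxx big1_seq; last first.
  move=> j /andP[_ hj]; have -> : (j == l) = false.
    by apply/negbTE; apply: contraNneq hls => <-.
  by rewrite hq ?cost_base // in_cons hj orbT.
rewrite addr0 /cost.
have h2 : 0 <= b / L l by apply: divr_ge0 => //; apply: ltW.
case: ltP => h.
  rewrite (_ : L l * (pstar l - (pstar l - b / L l)) = b) ?lexx //.
  by field; rewrite gt_eqF.
have hRl := hR l.
have : Rs l * (pstar l - b / L l - pstar l) <= 0.
  by apply: mulr_ge0_le0; [apply: ltW | lra].
lra.
Qed.
End Knap.
Section Shap.
Variables (R : realFieldType) (N P : finType) (Auth : P -> {set N}) (w : P -> R).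

Lemma prodPi (p : N -> R) (A S : {set N}) :
  \sum_(T in powerset S) (if A \subset T then PiTS p T S else 0) =
  if A \subset S then \prod_(i in A) p i else 0.
Proof.
case: (boolP (A \subset S)) => hAS; last first.
  rewrite big1 // => T; rewrite powersetE => hTS; case: ifP => // hAT.
  by move: hAS; rewrite (subset_trans hAT hTS).
pose F i := if i \in S then p i else 0.
pose G i := if i \in A then 0 else if i \in S then 1 - p i else 1.
have e1 : \prod_(i in A) p i = \prod_i (F i + G i).
  rewrite big_mkcond; apply: eq_bigr => i _ /=; rewrite /F /G.
  case: (boolP (i \in A)) => hiA; first by rewrite (subsetP hAS _ hiA) addr0.
  by case: (i \in S); [rewrite addrC subrK | rewrite add0r].
rewrite e1 bigA_distr big_mkcond /=.
apply: eq_big => // J _.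
rewrite powersetE; case: (boolP (J \subset S)) => hJS; last first.
  have [i hiJ hiS] := subsetPn hJS.
  by rewrite (bigD1 i) //= hiJ /F (negbTE hiS) mul0r.
case: (boolP (A \subset J)) => hAJ; last first.
  have [i hiA hiJ] := subsetPn hAJ.
  by rewrite (bigD1 i) //= (negbTE hiJ) /G hiA mul0r.
rewrite /PiTS [X in X * _ = _]big_mkcond [X in _ * X = _]big_mkcond -big_split /=.
apply: eq_bigr => i _; rewrite in_setD /F /G.
case: (boolP (i \in J)) => hiJ /=; first by rewrite (subsetP hJS _ hiJ) mulr1 ?hiJ.
have hiA : i \notin A by apply: contra hiJ; apply: (subsetP hAJ).
by rewrite (negbTE hiA) mul1r; case: (i \in S).
Qed.

Lemma vbarE (p : N -> R) S : vbar p (vFO Auth w) S =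
  \sum_k (if Auth k \subset S then w k * \prod_(i in Auth k) p i else 0).
Proof.
rewrite /vbar /vFO.
under eq_bigr => T _ do rewrite big_mkcond big_distrl /=.
rewrite exchange_big /=; apply: eq_bigr => k _.
transitivity (w k * \sum_(T in powerset S) (if Auth k \subset T then PiTS p T S else 0)).
  by rewrite big_distrr; apply: eq_bigr => T _; case: (Auth k \subset T); rewrite /= ?mul0r ?mulr0.
by rewrite prodPi; case: ifP; rewrite ?mulr0.
Qed.

Lemma card_perms : #|{perm N}| = #|N|`!.
Proof.
rewrite -cardsT -card_perm; apply: eq_card => s; rewrite !inE.
by symmetry; apply/subsetP => z _; rewrite in_setT.
Qed.

Lemma count_half x o : o != x ->
  \sum_(pi : {perm N}) (if o \in pred_set pi x then 1 else 0 : R) = (#|N|`!)%:R / 2.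
Proof.
move=> hox.
set f := fun pi : {perm N} => (if o \in pred_set pi x then 1 else 0 : R).
have e1 : \sum_pi f pi = \sum_pi (if x \in pred_set pi o then 1 else 0 : R).
  rewrite (reindex_inj (mulgI (tperm x o))) /=; apply: eq_bigr => pi _.
  by rewrite /f /pred_set !inE !permM tpermR tpermL.
have e2 : \sum_pi f pi + \sum_pi (if x \in pred_set pi o then 1 else 0 : R) = (#|N|`!)%:R.
  rewrite -big_split /=.
  transitivity (\sum_(pi : {perm N}) (1 : R)); last by rewrite sumr_const card_perms.
  apply: eq_bigr => pi _; rewrite /f /pred_set !inE.
  case: (ltngtP (enum_rank (pi o)) (enum_rank (pi x))) => h; rewrite ?addr0 ?add0r //.
  have : pi o = pi x by apply: enum_rank_inj; apply: val_inj.
  by move/perm_inj => eox; move: hox; rewrite eox eqxx.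
lra.
Qed.


Hypothesis h2 : forall k, #|Auth k| = 2%N.

Lemma other_author k x : x \in Auth k -> exists o, o != x /\ Auth k :\ x = [set o].
Proof.
move=> hxk.
have : #|Auth k :\ x| == 1%N.
  by have := h2 k; rewrite (cardsD1 x (Auth k)) hxk add1n => -[->].
case/cards1P => o ho; exists o; split => //.
have : o \in Auth k :\ x by rewrite ho set11.
by rewrite in_setD1 => /andP[].
Qed.

Lemma shapley_lin (v : {set N} -> R) (c : P -> R) x :
  (forall S : {set N}, v S = \sum_k (if Auth k \subset S then c k else 0)) ->
  Shapley v x = \sum_(k | x \in Auth k) c k / 2.
Proof.
move=> hv; rewrite /Shapley.
under eq_bigr => pi _ do rewrite !hv -sumrB.
rewrite exchange_big big_distrr /= [RHS]big_mkcond /=; apply: eq_bigr => k _.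
have hxP : forall pi, x \notin pred_set pi x by move=> pi; rewrite inE ltnn.
case: (boolP (x \in Auth k)) => hxk; last first.
  rewrite big1 ?mulr0 // => pi _.
  have -> : (Auth k \subset x |: pred_set pi x) = (Auth k \subset pred_set pi x).
    apply/subsetP/subsetP => H i hi; last by rewrite in_setU1 H ?orbT.
    have := H i hi; rewrite in_setU1; case/orP => // /eqP eix.
    by move: hxk; rewrite -eix hi.
  by rewrite subrr.
have [o [hox ho]] := other_author _ _ hxk.
have hA : Auth k = x |: [set o] by rewrite -ho setD1K.
have e : forall pi : {perm N},
  (if Auth k \subset x |: pred_set pi x then c k else 0) -
  (if Auth k \subset pred_set pi x then c k else 0) =
  c k * (if o \in pred_set pi x then 1 else 0).
  move=> pi; rewrite hA !subUset !sub1set !in_setU1 eqxx (negbTE (hxP pi)) (negbTE hox) /=.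
  by case: (o \in pred_set pi x); rewrite ?subr0 ?mulr1 ?mulr0.
under eq_bigr => pi _ do rewrite e.
rewrite -big_distrr /= count_half //.
have hn : (#|N|`!)%:R != 0 :> R by rewrite pnatr_eq0 -lt0n fact_gt0.
by field.
Qed.

Lemma sum_two (q : N -> R) x :
  \sum_(k | x \in Auth k) w k * \prod_(i in Auth k) q i =
  q x * \sum_(l | l != x) Cxl Auth w x l * q l.
Proof.
rewrite /Cxl; symmetry.
under eq_bigr => l _ do rewrite big_distrl /=.
rewrite (exchange_big_dep (fun k => x \in Auth k)) /=; last by move=> l k _ /andP[].
rewrite big_distrr /=; apply: eq_bigr => k hxk.
have [o [hox ho]] := other_author _ _ hxk.
rewrite (big_setD1 x hxk) ho big_set1.
rewrite (eq_bigl (fun l => l \in Auth k :\ x)); last by move=> l; rewrite in_setD1 hxk /=; case: (l \in Auth k); rewrite ?andbT ?andbF.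
by rewrite ho big_set1 /= mulrCA.
Qed.

End Shap.
Theorem corollary3 (R : realFieldType) (N P : finType)
  (Auth : P -> {set N}) (w : P -> R)
  (hw : forall k, 0 <= w k)
  (h2 : forall k, #|Auth k| = 2%N)
  (x y : N) (hxy : x != y)
  (px : R) (hpx : 0 <= px <= 1)
  (pstar L Rs : N -> R)
  (hpy : 0 <= pstar y <= 1)
  (hpstar : forall l, l != x -> l != y -> 0 < pstar l <= 1)
  (hL : forall l, 0 < L l) (hR : forall l, 0 < Rs l)
  (B : R) (hB : 0 <= B)
  (s : seq N)
  (hs_perm : perm_eq s (enum (CA Auth x :\: (y |: CA Auth y))))
  (hs_sorted : sorted (fun a b => Cxl Auth w x b / L b <= Cxl Auth w x a / L a) s) :
  let g := greedy pstar L B x px s in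
  [/\ feasible_attack pstar L Rs B x px g,
      pairwise_attack Auth pstar x y g &
      forall p : N -> R,
        feasible_attack pstar L Rs B x px p ->
        pairwise_attack Auth pstar x y p ->
        Shapley (vbar g (vFO Auth w)) x <= Shapley (vbar p (vFO Auth w)) x].
Proof.
move=> g.
pose q0 := fun j => if j == x then px else pstar j.
have gE : g = greedy_aux pstar L s B q0 by [].
have hmem : forall j, (j \in s) = (j \in CA Auth x :\: (y |: CA Auth y)).
  by move=> j; rewrite (perm_mem hs_perm) mem_enum.
have hus : uniq s by rewrite (perm_uniq hs_perm) enum_uniq.
have hsxy : forall j, j \in s -> j != x /\ j != y.
  move=> j; rewrite hmem in_setD in_setU1 negb_or => /andP[/andP[hjy _] hjCA].
  by split => //; move: hjCA; rewrite /CA inE => /andP[].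
have hxs : x \notin s by apply/negP => /hsxy []; rewrite eqxx.
have hys : y \notin s by apply/negP => /hsxy [] _; rewrite eqxx.
have hps : forall j, j \in s -> 0 < pstar j.
  by move=> j /hsxy [e1 e2]; case/andP: (hpstar j e1 e2).
have hq0 : forall j, j \in s -> q0 j = pstar j.
  by move=> j /hsxy [h1 _]; rewrite /q0 (negbTE h1).
have gout : forall j, j \notin s -> g j = q0 j.
  by move=> j hj; rewrite gE greedy_notin.
have hC : forall l, 0 <= Cxl Auth w x l by move=> l; apply: sumr_ge0 => k _; apply: hw.
have sum_s : forall F : N -> R, \sum_(j | (j != x) && (j \in s)) F j = \sum_(j <- s) F j.
  move=> F; rewrite (big_uniq _ hus); apply: eq_bigl => j.
  by case: (boolP (j \in s)) => h; rewrite ?andbF ?andbT //; case: (hsxy j h) => ->.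
have hpstar1 : forall j, j != x -> 0 <= pstar j <= 1.
  move=> j hjx; case: (eqVneq j y) => [->|hjy] //.
  by case/andP: (hpstar j hjx hjy) => e1 e2; rewrite e2 ltW.
split.
- split; first by rewrite gout // /q0 eqxx.
  split.
    move=> j hjx; have /andP[h0 h1] := hpstar1 j hjx; rewrite gE.
    case: (@greedy_range _ _ pstar L hL s B q0 j hB (fun i hi => ltW (hps i hi))) => [->|].
      by rewrite /q0 (negbTE hjx) h0 h1.
    by case/andP => e1 e2; rewrite e1 (le_trans e2 h1).
  rewrite (bigID (fun j => j \in s)) /=.
  rewrite [X in _ + X]big1; last first.
    by move=> j /andP[hjx hjs]; rewrite gout // /q0 (negbTE hjx) cost_base.
  rewrite addr0 sum_s gE.
  exact: (@greedy_cost _ _ pstar L hL Rs s hus hR hps B q0 hB hq0).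
- split; first by rewrite gout // /q0 eq_sym (negbTE hxy).
  move=> z hz hzx; rewrite gout ?/q0 ?(negbTE hzx) //.
  by rewrite hmem in_setD in_setU1 hz orbT.
move=> p [hpx' [hpr hpc]] [hpy' hpz].
have shE : forall q, Shapley (vbar q (vFO Auth w)) x =
    q x * (\sum_(l | l != x) Cxl Auth w x l * q l) / 2.
  move=> q; rewrite (@shapley_lin _ _ _ Auth h2 _ (fun k => w k * \prod_(i in Auth k) q i)); last first.
    by move=> S; apply: vbarE.
  by rewrite -mulr_suml sum_two.
rewrite !shE hpx' gout // /q0 eqxx.
apply: ler_wpM2r; first by rewrite invr_ge0 ler0n.
apply: ler_wpM2l; first by case/andP: hpx.
rewrite (bigID (fun l => l \in s)) [X in _ <= X](bigID (fun l => l \in s)) /=.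
have e_out : \sum_(l | (l != x) && (l \notin s)) Cxl Auth w x l * g l =
             \sum_(l | (l != x) && (l \notin s)) Cxl Auth w x l * p l.
  apply: eq_bigr => l /andP[hlx hls].
  case: (boolP (l \in CA Auth x)) => hlCA.
    have hly : l \in y |: CA Auth y.
      by move: hls; rewrite hmem in_setD hlCA andbT negbK.
    rewrite gout // /q0 (negbTE hlx).
    move: hly; rewrite in_setU1 => /orP [/eqP -> | hlCy]; first by rewrite hpy'.
    by rewrite hpz.
  have -> : Cxl Auth w x l = 0.
    rewrite /Cxl big1 // => k /andP[hxk hlk].
    move/negP: hlCA; case; rewrite /CA inE hlx /=.
    by apply/existsP; exists k; rewrite hxk hlk.
  by rewrite !mul0r.
rewrite e_out lerD2r !sum_s.
pose d l := if p l < pstar l then pstar l - p l else 0.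
have hd : forall j, j \in s -> 0 <= d j <= pstar j.
  move=> j hj; have [hjx _] := hsxy j hj; have /andP[hp0 _] := hpr j hjx.
  have hpj := hps j hj; rewrite /d; case: ltP => h; apply/andP; split; lra.
have hcs : \sum_(j <- s) cost pstar L Rs j (p j) <= B.
  apply: le_trans hpc; rewrite [X in _ <= X](bigID (fun j => j \in s)) /= sum_s.
  rewrite lerDl; apply: sumr_ge0 => j _; exact: cost_ge0.
have hsd : \sum_(j <- s) L j * d j <= B.
  apply: le_trans hcs; apply: ler_sum => j _; rewrite /d /cost.
  case: ltP => h; first exact: lexx.
  rewrite mulr0; apply: mulr_ge0; [exact: ltW | lra].
have hk := @knap _ _ pstar L (Cxl Auth w x) hL hC s hus hs_sorted B q0 d hB hq0 hd hsd.
rewrite -gE in hk.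
have E1 : \sum_(j <- s) Cxl Auth w x j * (pstar j - g j) =
  \sum_(j <- s) Cxl Auth w x j * pstar j - \sum_(j <- s) Cxl Auth w x j * g j.
  by rewrite -sumrB; apply: eq_bigr => j _; ring.
have E2 : \sum_(j <- s) Cxl Auth w x j * (pstar j - d j) =
  \sum_(j <- s) Cxl Auth w x j * pstar j - \sum_(j <- s) Cxl Auth w x j * d j.
  by rewrite -sumrB; apply: eq_bigr => j _; ring.
have E3 : \sum_(j <- s) Cxl Auth w x j * (pstar j - d j) <=
  \sum_(j <- s) Cxl Auth w x j * p j.
  rewrite big_seq [X in _ <= X]big_seq; apply: ler_sum => j hj.
  apply: ler_wpM2l; first exact: hC.
  rewrite /d; case: ltP => h; lra.
lra.
Qed.
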